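(* Let $n \ge 3$ be an integer, let $\alpha$ be a primitive element of $\mathbb{F}_{2^n}$ (identified with $\mathbb{F}_2^n$), and let $X = \{0, \alpha^{i_1}, \ldots, \alpha^{i_7}\}$ be a $3$-dimensional $\mathbb{F}_2$-subspace with $|\Delta(X)| = 42$. Then the cyclic shifts $\Phi_j(X)$, $0 \le j \le 2^n-2$, are $2^n-1$ pairwise distinct $3$-dimensional subspaces, and the $7\cdot(2^n-1)$ two-dimensional subspaces contained in these $2^n-1$ subspaces (seven in each) are pairwise distinct.
   Context: The cyclic shift mapping is $\Phi_j(\alpha^i) = \alpha^{i+j}$ (exponents modulo $2^n-1$), $\Phi_j(0)=0$, applied to sets elementwise. For a $3$-dimensional subspace $X = \{0,\alpha^{i_1},\ldots,\alpha^{i_7}\}$ with $i_1,\ldots,i_7 \in \{0,\ldots,2^n-2\}$ distinct, its difference set is $\Delta(X) = \{ i_r - i_s \bmod (2^n-1) : 1 \le r,s \le 7,\ r \ne s\}$. *)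

(* Defs.v *)
From mathcomp Require Import all_boot all_order all_algebra all_field.
Set Implicit Arguments. Unset Strict Implicit. Unset Printing Implicit Defensive.
Import GRing.Theory.
Local Open Scope ring_scope.

Section Defs.
Variable F : finFieldType.

Definition Nmul : nat := (#|F|.-1)%N.

(* An F_2-subspace of F (viewed as F_2^n) of dimension k: a subset containing 0,
   closed under addition (in characteristic 2 this is F_2-linear closure),
   with 2^k elements. *)
Definition is_subspace2 (X : {set F}) (k : nat) : bool :=
  [&& 0 \in X, [forall x in X, forall y in X, (x + y) \in X] & #|X| == (2 ^ k)%N].

Definition dlog (a x : F) : nat :=
  if [pick i : 'I_Nmul | a ^+ i == x] is Some i then val i else 0%N.

Definition Phi (a : F) (j : nat) (x : F) : F :=
  if x == 0 then 0 else a ^+ ((dlog a x + j) %% Nmul).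

Definition Phi_set (a : F) (j : nat) (X : {set F}) : {set F} :=
  [set Phi a j x | x in X].

Definition Delta (a : F) (X : {set F}) : seq nat :=
  undup [seq ((dlog a p.1 + Nmul - dlog a p.2) %% Nmul)%N
        | p <- [seq (x, y) | x <- enum (X :\ 0), y <- enum (X :\ 0)] & p.1 != p.2].

Definition subspaces2_of (Y : {set F}) : {set {set F}} :=
  [set Z : {set F} | (Z \subset Y) && is_subspace2 Z 2].
End Defs.

(* Main.v *)
Require Import Defs.
From mathcomp Require Import all_boot all_order all_algebra all_field.
From mathcomp Require Import zify.
Set Implicit Arguments. Unset Strict Implicit. Unset Printing Implicit Defensive.
Import GRing.Theory.
Local Open Scope ring_scope.

Lemma card_pairs (T : finType) (A : {set T}) :
  #|[set p : T * T | (p.1 \in A) && (p.2 \in A) && (p.1 != p.2)]| = (#|A| * (#|A|).-1)%N.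
Proof.
have -> : [set p : T * T | (p.1 \in A) && (p.2 \in A) && (p.1 != p.2)] =
   setX A A :\: [set (x, x) | x in A].
  apply/setP => [[x y]]; rewrite !inE /=.
  case: (boolP (x \in A)) => xA; case: (boolP (y \in A)) => yA; rewrite /= ?andbF ?andbT //.
  case: eqP => [->|nxy]; first by rewrite imset_f.
  apply/esym/negP => /imsetP [z _ [e1 e2]]; apply: nxy; by rewrite e1 e2.
rewrite cardsD (setIidPr _).
  rewrite cardsX card_imset; last by move=> x y [].
  by rewrite -subn1 mulnBr muln1.
by apply/subsetP => p /imsetP [x xA ->]; rewrite inE /= xA.
Qed.

Section C2.
Variable F : finFieldType.
Hypothesis ch2 : 2 \in [pchar F].
Let c2 := addrr_pchar2 ch2.

Lemma span4_closed (u v : F) x y :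
  x \in [set 0; u; v; u + v] -> y \in [set 0; u; v; u + v] -> x + y \in [set 0; u; v; u + v].
Proof.
rewrite !inE -!orbA => /or4P[]/eqP-> /or4P[]/eqP->; rewrite ?add0r ?addr0 ?c2 ?eqxx ?orbT //.
all: first [ by rewrite addrC eqxx ?orbT
           | by rewrite addrA c2 add0r eqxx ?orbT
           | by rewrite addrCA c2 addr0 eqxx ?orbT
           | by rewrite addrAC c2 add0r eqxx ?orbT
           | by rewrite -addrA c2 addr0 eqxx ?orbT ].
Qed.

Lemma card4 (u v : F) : u != 0 -> v != 0 -> u != v -> #|[set 0; u; v; u + v]| = 4%N.
Proof.
move=> u0 v0 uv.
have uv0 : u + v != 0 by apply: contra uv; rewrite addr_eq0 (oppr_pchar2 ch2).
have e1 : u != u + v by rewrite -subr_eq0 opprD addrA subrr add0r oppr_eq0.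
have e2 : v != u + v by rewrite -subr_eq0 opprD addrCA subrr addr0 oppr_eq0.
rewrite [_ :|: [set u + v]]setUC [_ :|: [set v]]setUC !cardsU1 cards1 !inE !negb_or.
have f1 := e1; have f2 := e2; have f3 := uv0; have f4 := u0; have f5 := v0; have f6 := uv.
rewrite eq_sym in f1; rewrite eq_sym in f2; rewrite eq_sym in f3; rewrite eq_sym in f4;
rewrite eq_sym in f5; rewrite eq_sym in f6.
by rewrite ?(negbTE e1, negbTE e2, negbTE uv0, negbTE u0, negbTE v0, negbTE uv,
  negbTE f1, negbTE f2, negbTE f3, negbTE f4, negbTE f5, negbTE f6).
Qed.

Lemma sub_closed (Z : {set F}) k x y : is_subspace2 Z k -> x \in Z -> y \in Z -> x + y \in Z.
Proof.
case/and3P => _ /forall_inP cl _ xZ yZ.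
by have /forall_inP := cl x xZ; apply.
Qed.

Lemma span2 (Z : {set F}) u v : is_subspace2 Z 2 -> u \in Z -> v \in Z ->
  u != 0 -> v != 0 -> u != v -> Z = [set 0; u; v; u + v].
Proof.
move=> sZ uZ vZ u0 v0 uv; apply/esym/eqP.
have /and3P [z0 _ /eqP cZ] := sZ.
rewrite eqEcard card4 // cZ leqnn andbT.
apply/subsetP => x; rewrite !inE -!orbA => /or4P [] /eqP -> //.
exact: sub_closed sZ uZ vZ.
Qed.

Lemma span_sub (Y : {set F}) k u v : is_subspace2 Y k -> u \in Y -> v \in Y ->
  [set 0; u; v; u + v] \subset Y.
Proof.
move=> sY uY vY; have /and3P [y0 _ _] := sY.
apply/subsetP => x; rewrite !inE -!orbA => /or4P [] /eqP -> //.
exact: sub_closed sY uY vY.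
Qed.

Lemma span_sp (u v : F) : u != 0 -> v != 0 -> u != v -> is_subspace2 [set 0; u; v; u + v] 2.
Proof.
move=> u0 v0 uv; apply/and3P; split.
- by rewrite !inE eqxx.
- apply/forall_inP => x xS; apply/forall_inP => y yS; exact: span4_closed.
- by rewrite card4.
Qed.

Lemma count7 (Y : {set F}) : is_subspace2 Y 3 -> #|subspaces2_of Y| = 7%N.
Proof.
move=> sY; have /and3P [y0 _ /eqP cY] := sY.
have cY0 : #|Y :\ 0| = 7%N by move: (cardsD1 0 Y); rewrite y0 cY => -[].
pose P := [set p : F * F | (p.1 \in Y :\ 0) && (p.2 \in Y :\ 0) && (p.1 != p.2)].
pose f (p : F * F) := [set 0; p.1; p.2; p.1 + p.2].
have cP : #|P| = 42%N by rewrite card_pairs cY0.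
have Hf : forall p, p \in P -> f p \in subspaces2_of Y.
  move=> [u v]; rewrite !inE /= => /andP [/andP [/andP [u0 uY] /andP [v0 vY]] uv].
  by rewrite (span_sub sY) // span_sp.
have fib : forall Z, Z \in subspaces2_of Y ->
    #|[set p | (p \in P) && (f p == Z)]| = 6%N.
  move=> Z; rewrite inE => /andP [ZY sZ].
  have /and3P [z0 _ /eqP cZ] := sZ.
  have cZ0 : #|Z :\ 0| = 3%N by move: (cardsD1 0 Z); rewrite z0 cZ => -[].
  rewrite -[6%N]/(3 * 3.-1)%N -cZ0 -card_pairs; apply: eq_card => [[u v]].
  rewrite !inE /=; apply/idP/idP.
    move=> /andP [/andP [/andP [/andP [u0 uY] /andP [v0 vY]] uv] /eqP <-].
    by rewrite !inE !eqxx !orbT u0 v0 uv.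
  move=> /andP [/andP [/andP [u0 uZ] /andP [v0 vZ]] uv].
  rewrite u0 v0 uv (subsetP ZY _ uZ) (subsetP ZY _ vZ) /=.
  by rewrite [Z in _ == Z](span2 sZ uZ vZ).
have : #|P| = (#|subspaces2_of Y| * 6)%N.
  rewrite -sum1_card (partition_big f (mem (subspaces2_of Y))) //=.
  rewrite -sum_nat_const; apply: eq_bigr => Z HZ.
  by rewrite sum1dep_card fib.
by rewrite cP => /eqP; rewrite -[42%N]/(7 * 6)%N eqn_mul2r /= => /eqP.
Qed.
End C2.
Section S.
Variable F : finFieldType.
Variable a : F.
Hypothesis prim : (Nmul F).-primitive_root a.

Lemma Nmul_gt0 : (0 < Nmul F)%N.
Proof. exact: prim_order_gt0 prim. Qed.

Lemma dlogP x : x != 0 -> (dlog a x < Nmul F)%N /\ a ^+ dlog a x = x.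
Proof.
move=> nx; rewrite /dlog; case: pickP => [i /eqP -> | H]; first by split => //; exact: ltn_ord.
have : x ^+ Nmul F = 1.
  have E := expf_card x; rewrite /Nmul.
  have H1 : (0 < #|F|)%N by rewrite (cardD1 0).
  rewrite -(prednK H1) exprS in E.
  apply: (mulfI nx); by rewrite mulr1.
case/(prim_rootP prim) => i Hi; by move: (H i); rewrite -Hi eqxx.
Qed.

Lemma PhiE j x : Phi a j x = x * a ^+ j.
Proof.
rewrite /Phi; case: eqP => [->|/eqP nx]; first by rewrite mul0r.
have [_ Hd] := dlogP nx.
rewrite -{2}Hd -exprD; apply/eqP; rewrite (eq_prim_root_expr prim) modn_mod //.
Qed.

Lemma Phi_setE j X : Phi_set a j X = [set x * a ^+ j | x in X].
Proof. by apply: eq_imset => x; rewrite PhiE. Qed.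

Lemma a_neq0 j : a ^+ j != 0.
Proof.
apply: expf_neq0; apply/eqP => a0.
have := prim_expr_order prim; rewrite a0 expr0n.
by case: (Nmul F) Nmul_gt0 => // m _; move/eqP; rewrite eq_sym oner_eq0.
Qed.
Lemma uniq_map_inj (T U : eqType) (f : T -> U) s x y :
  uniq (map f s) -> x \in s -> y \in s -> f x = f y -> x = y.
Proof.
elim: s => //= z s IH /andP [nz us]; rewrite !inE.
case/orP => [/eqP -> | xs]; case/orP => [/eqP -> // | ys].
- by move=> e; move: nz; rewrite e map_f.
- by move=> e; move: nz; rewrite -e map_f.
- exact: IH.
Qed.

Lemma key (X : {set F}) x1 y1 x2 y2 : 0 \in X -> #|X| = 8%N -> size (Delta a X) = 42%N ->
  x1 \in X :\ 0 -> y1 \in X :\ 0 -> x2 \in X :\ 0 -> y2 \in X :\ 0 ->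
  x1 != y1 -> x2 != y2 -> x1 * y2 = x2 * y1 -> x1 = x2.
Proof.
move=> X0 cX sD h1 h2 h3 h4 n1 n2 E.
have cX0 : #|X :\ 0| = 7%N by move: (cardsD1 0 X); rewrite X0 cX => -[].
set L := [seq p <- [seq (x, y) | x <- enum (X :\ 0), y <- enum (X :\ 0)] | p.1 != p.2].
set g := fun p : F * F => ((dlog a p.1 + Nmul F - dlog a p.2) %% Nmul F)%N.
have DE : Delta a X = undup (map g L) by [].
have memL : forall p, (p \in L) =
   (p \in [set p : F * F | (p.1 \in X :\ 0) && (p.2 \in X :\ 0) && (p.1 != p.2)]).
  move=> [u v]; rewrite mem_filter inE /=.
  have -> : ((u, v) \in [seq (x, y) | x <- enum (X :\ 0), y <- enum (X :\ 0)]) =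
            (u \in enum (X :\ 0)) && (v \in enum (X :\ 0)).
    apply/allpairsP/andP => [[[x y] [hx hy [-> ->]]] // | [hu hv]].
    by exists (u, v).
  by rewrite !mem_enum andbC.
have uL : uniq L.
  apply: filter_uniq; apply: allpairs_uniq; rewrite ?enum_uniq //.
  by move=> [? ?] [? ?].
have sL : size L = 42%N.
  by move/card_uniqP: uL => <-; rewrite (eq_card memL) card_pairs cX0.
have um : uniq (map g L).
  by rewrite (uniq_size_uniq (undup_uniq _) (mem_undup _)) size_map sL -DE sD.
have nz : forall x, x \in X :\ 0 -> x != 0 by move=> x /setD1P [].
have [dx1 ex1] := dlogP (nz _ h1).
have [dy1 ey1] := dlogP (nz _ h2).
have [dx2 ex2] := dlogP (nz _ h3).
have [dy2 ey2] := dlogP (nz _ h4).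
have : g (x1, y1) = g (x2, y2).
  rewrite /g /=.
  have M : (dlog a x1 + dlog a y2 == dlog a x2 + dlog a y1 %[mod Nmul F]).
    by rewrite -(eq_prim_root_expr prim) !exprD ex1 ey2 ex2 ey1 E.
  apply/eqP; rewrite -(eqn_modDr (dlog a y1 + dlog a y2)).
  have -> : (dlog a x1 + Nmul F - dlog a y1 + (dlog a y1 + dlog a y2) =
             dlog a x1 + dlog a y2 + Nmul F)%N by lia.
  have -> : (dlog a x2 + Nmul F - dlog a y2 + (dlog a y1 + dlog a y2) =
             dlog a x2 + dlog a y1 + Nmul F)%N by lia.
  by rewrite !modnDr.
move=> eg.
have p1 : (x1, y1) \in L by rewrite memL inE /= h1 h2 n1.
have p2 : (x2, y2) \in L by rewrite memL inE /= h3 h4 n2.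
by case: (uniq_map_inj um p1 p2 eg).
Qed.

Lemma scale_sub (X : {set F}) (c : F) k : c != 0 -> is_subspace2 X k ->
  is_subspace2 [set x * c | x in X] k.
Proof.
move=> c0 sX; have /and3P [x0 _ /eqP cX] := sX.
apply/and3P; split.
- by apply/imsetP; exists 0; rewrite ?mul0r.
- apply/forall_inP => x /imsetP [x' x'X ->]; apply/forall_inP => y /imsetP [y' y'X ->].
  by rewrite -mulrDl; apply/imsetP; exists (x' + y'); rewrite ?(sub_closed sX).
- by rewrite card_imset ?cX //; exact: mulIf.
Qed.

Lemma shift_inj (X : {set F}) j k u v : 0 \in X -> #|X| = 8%N -> size (Delta a X) = 42%N ->
  (j < Nmul F)%N -> (k < Nmul F)%N -> u != 0 -> v != 0 -> u != v ->
  u \in [set x * a ^+ j | x in X] -> v \in [set x * a ^+ j | x in X] ->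
  u \in [set x * a ^+ k | x in X] -> v \in [set x * a ^+ k | x in X] -> j = k.
Proof.
move=> X0 cX sD jN kN u0 v0 uv /imsetP [x1 hx1 ex1] /imsetP [x2 hx2 ex2]
  /imsetP [y1 hy1 ey1] /imsetP [y2 hy2 ey2].
apply/eqP; apply/negPn/negP => jk.
have ajk : a ^+ j != a ^+ k.
  rewrite (eq_prim_root_expr prim) !modn_small //.
have nz0 : forall x c, u = x * c -> x != 0.
  by move=> x c e; apply: (contraNneq _ u0) => x0; by rewrite e x0 mul0r.
have nz1 : forall x c, v = x * c -> x != 0.
  by move=> x c e; apply: (contraNneq _ v0) => x0; by rewrite e x0 mul0r.
have m : forall x, x \in X -> x != 0 -> x \in X :\ 0 by move=> x xX x0; apply/setD1P; split.
have nxy1 : x1 != y1.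
  apply/eqP => e; move: ajk; rewrite -(inj_eq (mulfI (nz0 _ _ ex1))).
  by rewrite -ex1 e -ey1 eqxx.
have nxy2 : x2 != y2.
  apply/eqP => e; move: ajk; rewrite -(inj_eq (mulfI (nz1 _ _ ex2))).
  by rewrite -ex2 e -ey2 eqxx.
have E : x1 * y2 = x2 * y1.
  apply: (mulIf (mulf_neq0 (a_neq0 j) (a_neq0 k))).
  by rewrite (mulrACA x1) (mulrACA x2) -ex1 -ey2 -ex2 -ey1 mulrC.
have := key X0 cX sD (m _ hx1 (nz0 _ _ ex1)) (m _ hy1 (nz0 _ _ ey1))
  (m _ hx2 (nz1 _ _ ex2)) (m _ hy2 (nz1 _ _ ey2)) nxy1 nxy2 E.
by move=> e; move: uv; rewrite ex1 ex2 e eqxx.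
Qed.
End S.

Theorem lemma8 (F : finFieldType) (n : nat) (a : F) (X : {set F}) :
  (3 <= n)%N -> #|F| = (2 ^ n)%N ->
  (Nmul F).-primitive_root a ->
  is_subspace2 X 3 -> size (Delta a X) = 42%N ->
  [/\ (forall j, (j < Nmul F)%N -> is_subspace2 (Phi_set a j X) 3),
      (forall j k, (j < Nmul F)%N -> (k < Nmul F)%N ->
         Phi_set a j X = Phi_set a k X -> j = k),
      (forall j, (j < Nmul F)%N -> #|subspaces2_of (Phi_set a j X)| = 7%N) &
      (forall j k (Z : {set F}), (j < Nmul F)%N -> (k < Nmul F)%N ->
         Z \in subspaces2_of (Phi_set a j X) ->
         Z \in subspaces2_of (Phi_set a k X) -> j = k)].
Proof.
move=> n3 cF prim sX sD.
have ch2 : 2 \in [pchar F] by apply: (card_finPcharP cF).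
have /and3P [X0 _ /eqP cX] := sX.
have P1 : forall j, is_subspace2 (Phi_set a j X) 3.
  by move=> j; rewrite (Phi_setE prim); apply: scale_sub => //; apply: a_neq0.
split => //.
- move=> j k jN kN E.
  have cX0 : (1 < #|X :\ 0%R|)%N by move: (cardsD1 (0:F) X); rewrite X0 (cX : #|X| = 8%N) add1n => -[<-].
  have [x1 [x2 [h1 h2 n12]]] := card_gt1P cX0.
  move: h1 h2; rewrite !inE => /andP [x10 x1X] /andP [x20 x2X].
  have aj := a_neq0 prim j.
  have hu : x1 * a ^+ j \in [set x * a ^+ j | x in X] by apply/imsetP; exists x1.
  have hv : x2 * a ^+ j \in [set x * a ^+ j | x in X] by apply/imsetP; exists x2.
  apply: (shift_inj prim X0 cX sD jN kN _ _ _ hu hv).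
  + exact: mulf_neq0.
  + exact: mulf_neq0.
  + by rewrite (inj_eq (mulIf aj)).
  + by rewrite -(Phi_setE prim) -E (Phi_setE prim).
  + by rewrite -(Phi_setE prim) -E (Phi_setE prim).
- by move=> j _; apply: count7.
- move=> j k Z jN kN; rewrite !inE => /andP [Zj sZ] /andP [Zk _].
  have /and3P [z0 _ /eqP cZ] := sZ.
  have cZ0 : (1 < #|Z :\ 0%R|)%N by move: (cardsD1 (0:F) Z); rewrite z0 (cZ : #|Z| = 4%N) add1n => -[<-].
  have [u [v [h1 h2 nuv]]] := card_gt1P cZ0.
  move: h1 h2; rewrite !inE => /andP [u0 uZ] /andP [v0 vZ].
  move: Zj Zk; rewrite !(Phi_setE prim) => Zj Zk.
  apply: (shift_inj prim X0 cX sD jN kN u0 v0 nuv); [exact: (subsetP Zj) | exact: (subsetP Zj) | exact: (subsetP Zk) | exact: (subsetP Zk)].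
Qed.
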